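(* Let $(\Sigma,h)$ be an $n$-dimensional Riemannian manifold and $Y$ a vector field on $\Sigma$ with $|Y|^2\neq0$, and let $\widehat\nabla$ be the Levi-Civita connection of $h$. Then $D_{ij}:=|Y|^{-n-2}(Y_iY_j)_{\mathrm{tf}}$ is a TT tensor if and only if $Y^j(\widehat\nabla_{(i}Y_{j)})_{\mathrm{tf}}=0$. (In particular this holds if $Y$ is a conformal Killing vector field.)
   Context: $(T_{ij})_{\mathrm{tf}}$ denotes the $h$-trace-free part of a symmetric tensor, e.g. $(Y_iY_j)_{\mathrm{tf}}=Y_iY_j-\frac1n|Y|^2h_{ij}$. A TT tensor is a symmetric, trace-free, divergence-free $(0,2)$-tensor. *)

(* Defs.v *)
(* Local coordinate formulation:
   a Riemannian manifold (Sigma,h) is represented on a coordinate chart,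
   i.e. an open set U of R^n (row vectors) with a smooth field of
   symmetric positive definite matrices h. Tensors are given by their
   coordinate components. *)
From HB Require Import structures.
From mathcomp Require Import all_boot all_order all_algebra.
From mathcomp Require Import all_classical all_reals all_analysis.
Set Implicit Arguments. Unset Strict Implicit. Unset Printing Implicit Defensive.
Import Order.TTheory GRing.Theory Num.Theory.
Import numFieldNormedType.Exports.
Local Open Scope classical_set_scope.
Local Open Scope ring_scope.

Section Riem.
Variables (R : realType) (n : nat).
Notation pt := 'rV[R]_n.

Definition pd (i : 'I_n) (f : pt -> R) : pt -> R :=
  fun x => derive f x (delta_mx 0 i).

Fixpoint iter_pd (s : seq 'I_n) (f : pt -> R) : pt -> R :=
  match s with [::] => f | i :: s' => pd i (iter_pd s' f) end.

Definition smooth_on (U : set pt) (f : pt -> R) : Prop :=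
  forall (s : seq 'I_n) (x : pt), U x -> differentiable (iter_pd s f) x.

Definition riemannian_metric (U : set pt) (h : pt -> 'M[R]_n) : Prop :=
  (forall i j, smooth_on U (fun y => h y i j)) /\
  (forall x, U x -> (h x)^T = h x) /\
  (forall x, U x -> forall v : 'rV[R]_n, v != 0 -> 0 < (v *m h x *m v^T) 0 0).

Definition hinv (h : pt -> 'M[R]_n) (x : pt) : 'M[R]_n := invmx (h x).

Definition Gam (h : pt -> 'M[R]_n) (k i j : 'I_n) (x : pt) : R :=
  2^-1 * \sum_(l < n) hinv h x k l *
     (pd i (fun y => h y l j) x + pd j (fun y => h y l i) x
      - pd l (fun y => h y i j) x).

(* vector field Y with contravariant components Y^i (x) = Y x 0 i *)
Definition lowerY (h : pt -> 'M[R]_n) (Y : pt -> 'rV[R]_n) (i : 'I_n) (x : pt) : R :=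
  \sum_(j < n) h x i j * Y x 0 j.

Definition normY2 (h : pt -> 'M[R]_n) (Y : pt -> 'rV[R]_n) (x : pt) : R :=
  \sum_(i < n) Y x 0 i * lowerY h Y i x.

Definition cov1 (h : pt -> 'M[R]_n) (w : 'I_n -> pt -> R) (k i : 'I_n) (x : pt) : R :=
  pd k (w i) x - \sum_(l < n) Gam h l k i x * w l x.

Definition cov2 (h : pt -> 'M[R]_n) (T : 'I_n -> 'I_n -> pt -> R)
  (k i j : 'I_n) (x : pt) : R :=
  pd k (T i j) x - \sum_(l < n) Gam h l k i x * T l j x
                 - \sum_(l < n) Gam h l k j x * T i l x.

Definition htrace (h : pt -> 'M[R]_n) (T : 'I_n -> 'I_n -> pt -> R) (x : pt) : R :=
  \sum_(i < n) \sum_(j < n) hinv h x i j * T i j x.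

Definition hdiv (h : pt -> 'M[R]_n) (T : 'I_n -> 'I_n -> pt -> R) (i : 'I_n) (x : pt) : R :=
  \sum_(j < n) \sum_(k < n) hinv h x j k * cov2 h T k i j x.

Definition tf (h : pt -> 'M[R]_n) (T : 'I_n -> 'I_n -> pt -> R) : 'I_n -> 'I_n -> pt -> R :=
  fun i j x => T i j x - n%:R^-1 * htrace h T x * h x i j.

Definition TT_on (U : set pt) (h : pt -> 'M[R]_n) (T : 'I_n -> 'I_n -> pt -> R) : Prop :=
  forall x, U x ->
    (forall i j, T i j x = T j i x) /\ htrace h T x = 0 /\
    (forall i, hdiv h T i x = 0).

Definition Dtensor (h : pt -> 'M[R]_n) (Y : pt -> 'rV[R]_n) : 'I_n -> 'I_n -> pt -> R :=
  fun i j x => (Num.sqrt (normY2 h Y x)) ^- (n + 2) *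
     tf h (fun a b y => lowerY h Y a y * lowerY h Y b y) i j x.

Definition symcovY_tf (h : pt -> 'M[R]_n) (Y : pt -> 'rV[R]_n) : 'I_n -> 'I_n -> pt -> R :=
  tf h (fun i j x => 2^-1 * (cov1 h (lowerY h Y) i j x + cov1 h (lowerY h Y) j i x)).

End Riem.

(* Main.v *)
Require Import Defs.
From HB Require Import structures.
From mathcomp Require Import all_boot all_order all_algebra.
From mathcomp Require Import all_classical all_reals all_analysis.
From mathcomp Require Import ring lra.
Set Implicit Arguments. Unset Strict Implicit. Unset Printing Implicit Defensive.
Import Order.TTheory GRing.Theory Num.Theory.
Import numFieldNormedType.Exports.
Local Open Scope classical_set_scope.
Local Open Scope ring_scope.
Section Ana.
Variables (R : realType) (n : nat).
Notation pt := 'rV[R]_n.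
Implicit Types (f g : pt -> R) (x : pt) (k : 'I_n).

Lemma pdD f g x k : differentiable f x -> differentiable g x ->
  pd k (fun y => f y + g y) x = pd k f x + pd k g x.
Proof.
move=> df dg; rewrite /pd (_ : (fun y => f y + g y) = f + g) //.
by apply: deriveD; apply: diff_derivable.
Qed.

Lemma pdB f g x k : differentiable f x -> differentiable g x ->
  pd k (fun y => f y - g y) x = pd k f x - pd k g x.
Proof.
move=> df dg; rewrite /pd (_ : (fun y => f y - g y) = f - g) //.
by apply: deriveB; apply: diff_derivable.
Qed.

Lemma pdM f g x k : differentiable f x -> differentiable g x ->
  pd k (fun y => f y * g y) x = f x * pd k g x + g x * pd k f x.
Proof.
move=> df dg; rewrite /pd (_ : (fun y => f y * g y) = f * g) //.
by rewrite deriveM //; apply: diff_derivable.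
Qed.

Lemma pdsum m (F : 'I_m -> pt -> R) x k : (forall i, differentiable (F i) x) ->
  pd k (fun y => \sum_(i < m) F i y) x = \sum_(i < m) pd k (F i) x.
Proof.
move=> dF; rewrite /pd -fct_sumE derive_sum //.
by move=> i; apply: diff_derivable.
Qed.

Lemma difD f g x : differentiable f x -> differentiable g x ->
  differentiable (fun y => f y + g y) x.
Proof. by move=> df dg; apply: (differentiableD df dg). Qed.

Lemma difB f g x : differentiable f x -> differentiable g x ->
  differentiable (fun y => f y - g y) x.
Proof. by move=> df dg; apply: (differentiableB df dg). Qed.

Lemma difM f g x : differentiable f x -> differentiable g x ->
  differentiable (fun y => f y * g y) x.
Proof. by move=> df dg; apply: (differentiableM df dg). Qed.

Lemma difC (c : R) x : differentiable (fun _ : pt => c) x.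
Proof. exact: differentiable_cst. Qed.

Lemma difsum m (F : 'I_m -> pt -> R) x : (forall i, differentiable (F i) x) ->
  differentiable (fun y => \sum_(i < m) F i y) x.
Proof. by move=> dF; rewrite -fct_sumE; apply: differentiable_sum. Qed.

Lemma pd_near f g x k : (\forall y \near x, f y = g y) -> pd k f x = pd k g x.
Proof. by move=> fg; rewrite /pd; apply: near_eq_derive. Qed.

Lemma dif_sqrt f x : differentiable f x -> 0 < f x ->
  differentiable (fun y => Num.sqrt (f y)) x.
Proof.
move=> df fx; apply: (@differentiable_comp _ _ _ _ f Num.sqrt) => //.
apply/derivable1_diffP; have [] := is_derive1_sqrt fx; by [].
Qed.

Lemma pd_sqrt f x k : differentiable f x -> 0 < f x ->
  pd k (fun y => Num.sqrt (f y)) x = (2 * Num.sqrt (f x))^-1 * pd k f x.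
Proof.
move=> df fx; rewrite /pd.
have dg : differentiable Num.sqrt (f x).
  apply/derivable1_diffP; have [] := is_derive1_sqrt fx; by [].
rewrite (_ : (fun y => Num.sqrt (f y)) = Num.sqrt \o f) //.
rewrite deriveE; last exact: differentiable_comp.
rewrite diff_comp // /=.
rewrite deriv1E; last by apply/derivable1_diffP.
rewrite /= -deriveE //.
rewrite derive1E derive_sqrt //. exact: mulrC.
Qed.

Lemma dif_powN f x m : differentiable f x -> f x != 0 ->
  differentiable (fun y => (f y) ^- m.+1) x.
Proof.
move=> df fx; apply: (@differentiableV _ _ (fun y => f y ^+ m.+1)).
  by rewrite -exprfctE; apply: differentiableX.
by rewrite expf_neq0.
Qed.

Lemma pd_powN f x m k : differentiable f x -> f x != 0 ->
  pd k (fun y => (f y) ^- m.+1) x = - (m.+1%:R) * (f x) ^- m.+2 * pd k f x.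
Proof.
move=> df fx; rewrite /pd.
rewrite deriveV; last 2 first.
- by rewrite expf_neq0.
- by rewrite -exprfctE; apply: derivableX; apply: diff_derivable.
rewrite -exprfctE deriveX /=; last exact: diff_derivable.
move: ('D_ _ f x) (f x) fx => d a a0.
rewrite !scalerA.
rewrite -mulr_natl.
have -> : forall u v : R, u *: v = u * v by [].
rewrite !exprSr; field.
by rewrite a0 expf_neq0.
Qed.

End Ana.
Section Alg.
Variables (R : realType) (n : nat).
Notation pt := 'rV[R]_n.

Lemma sum_delta (F : 'I_n -> R) c : \sum_(m < n) F m * (m == c)%:R = F c.
Proof.
rewrite (bigD1 c) //= eqxx mulr1 big1 ?addr0 // => m /negbTE ->.
by rewrite mulr0.
Qed.

Lemma sum_delta' (F : 'I_n -> R) c : \sum_(m < n) F m * (c == m)%:R = F c.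
Proof.
rewrite -[RHS](sum_delta F c); apply: eq_bigr => m _; by rewrite eq_sym.
Qed.

Variables (h : pt -> 'M[R]_n) (Y : pt -> 'rV[R]_n) (x : pt).
Local Notation Hi a b := (hinv h x a b).
Local Notation H a b := (h x a b).
Local Notation dh k a b := (pd k (fun y => h y a b) x).
Local Notation Y' a := (Y x 0 a).
Local Notation w a := (lowerY h Y a x).

Hypothesis Hsym : forall i j, H i j = H j i.
Hypothesis Hisym : forall i j, Hi i j = Hi j i.
Hypothesis HHi : forall i j, \sum_k H i k * Hi k j = (i == j)%:R.
Hypothesis HiH : forall i j, \sum_k Hi i k * H k j = (i == j)%:R.
Hypothesis dHsym : forall k i j, dh k i j = dh k j i.

Definition GL (c a b : 'I_n) : R := 2^-1 * (dh a c b + dh b c a - dh c a b).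

Lemma GamL a b c : \sum_l Gam h l a b x * H l c = GL c a b.
Proof.
rewrite /Gam /GL.
under eq_bigr => l _ do rewrite -mulrA big_distrl /=.
rewrite -big_distrr /= exchange_big /=; congr (_ * _).
set E := fun m => dh a m b + dh b m a - dh m a b.
transitivity (\sum_m E m * (m == c)%:R); last exact: sum_delta.
apply: eq_bigr => m _; rewrite -HiH big_distrr /=.
apply: eq_bigr => l _; rewrite (Hisym l m) /E; ring.
Qed.

Lemma GamW a b : \sum_l Gam h l a b x * w l = \sum_c Y' c * GL c a b.
Proof.
rewrite /lowerY.
under eq_bigr => l _ do rewrite big_distrr /=.
rewrite exchange_big /=; apply: eq_bigr => c _.
rewrite -GamL big_distrr /=; apply: eq_bigr => l _; ring.
Qed.

Lemma Hiw j : \sum_i Hi i j * w i = Y' j.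
Proof.
rewrite /lowerY.
under eq_bigr => i _ do rewrite big_distrr /=.
rewrite exchange_big /=.
rewrite -[RHS](sum_delta' (fun c => Y' c) j); apply: eq_bigr => c _.
rewrite -HiH big_distrr /=; apply: eq_bigr => i _; rewrite (Hisym i j); ring.
Qed.

Lemma Hh i k : \sum_j Hi j k * H i j = (i == k)%:R.
Proof. rewrite -HHi; apply: eq_bigr => j _; by rewrite mulrC. Qed.

Lemma Yh i : \sum_j Y' j * H i j = w i.
Proof. rewrite /lowerY; apply: eq_bigr => j _; by rewrite mulrC. Qed.

Lemma htr_ww : htrace h (fun a b y => lowerY h Y a y * lowerY h Y b y) x = normY2 h Y x.
Proof.
rewrite /htrace /normY2 exchange_big /=; apply: eq_bigr => j _.
rewrite -Hiw big_distrl /=; apply: eq_bigr => i _; ring.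
Qed.

Lemma htr_h : \sum_(i < n) \sum_(j < n) Hi i j * H i j = n%:R.
Proof.
transitivity (\sum_(i < n) (1 : R)); last by rewrite sumr_const card_ord.
apply: eq_bigr => i _; rewrite -[RHS]/((true)%:R) -[in RHS](eqxx i) -HiH.
by apply: eq_bigr => j _; rewrite (Hsym i j).
Qed.


Lemma sum2D (F G : 'I_n -> 'I_n -> R) :
  \sum_a \sum_b (F a b + G a b) = \sum_a \sum_b F a b + \sum_a \sum_b G a b.
Proof. rewrite -big_split /=; apply: eq_bigr => a _; by rewrite big_split. Qed.

Lemma sum2N (F : 'I_n -> 'I_n -> R) :
  \sum_a \sum_b (- F a b) = - \sum_a \sum_b F a b.
Proof. rewrite -sumrN; apply: eq_bigr => a _; by rewrite sumrN. Qed.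

Lemma sum2Z (c : R) (F : 'I_n -> 'I_n -> R) :
  \sum_a \sum_b (c * F a b) = c * \sum_a \sum_b F a b.
Proof. rewrite mulr_sumr; apply: eq_bigr => a _; by rewrite mulr_sumr. Qed.

Lemma sum2_swap (F : 'I_n -> 'I_n -> R) :
  \sum_a \sum_b F a b = \sum_a \sum_b F b a.
Proof. by rewrite exchange_big. Qed.

Lemma df_N k (dY dw : 'I_n -> R) :
  (forall a, dw a = \sum_b (H a b * dY b + Y' b * dh k a b)) ->
  \sum_a (Y' a * dw a + w a * dY a) =
  2 * \sum_a Y' a * (dw a - \sum_c Y' c * GL c k a).
Proof.
move=> Hdw.
set A := \sum_a \sum_b Y' a * Y' b * dh k a b.
set B := \sum_a \sum_b Y' a * H a b * dY b.
have h1 : \sum_a Y' a * dw a = B + A.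
  rewrite /A /B -sum2D; apply: eq_bigr => a _.
  rewrite Hdw big_distrr /=; apply: eq_bigr => b _; ring.
have h2 : \sum_a w a * dY a = B.
  rewrite /B sum2_swap /lowerY; apply: eq_bigr => a _.
  rewrite big_distrl /=; apply: eq_bigr => b _; rewrite (Hsym b a); ring.
have h3 : \sum_a Y' a * \sum_c Y' c * GL c k a = 2^-1 * A.
  have e1 : \sum_a \sum_c Y' a * Y' c * dh a c k = \sum_a \sum_c Y' a * Y' c * dh c k a.
    rewrite sum2_swap; apply: eq_bigr => a _; apply: eq_bigr => c _.
    rewrite (dHsym c a k); ring.
  have e2 : \sum_a \sum_c Y' a * Y' c * dh k c a = A.
    apply: eq_bigr => a _; apply: eq_bigr => c _; rewrite (dHsym k c a); ring.
  transitivity (2^-1 * (\sum_a \sum_c Y' a * Y' c * dh k c a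
     + \sum_a \sum_c Y' a * Y' c * dh a c k
     + - \sum_a \sum_c Y' a * Y' c * dh c k a)); last by rewrite e1 e2; ring.
  rewrite -sum2N -!sum2D -sum2Z; apply: eq_bigr => a _.
  rewrite big_distrr /=; apply: eq_bigr => c _; rewrite /GL; ring.
rewrite big_split /= h1 h2.
have -> : \sum_a Y' a * (dw a - \sum_c Y' c * GL c k a) =
  \sum_a Y' a * dw a - \sum_a Y' a * \sum_c Y' c * GL c k a.
  rewrite -sumrB; apply: eq_bigr => a _; ring.
by rewrite h1 h3; field.
Qed.


Local Notation ni := (n%:R^-1 : R).

Lemma cov2_D (D : 'I_n -> 'I_n -> pt -> R) (s f ds df : R) (dw : 'I_n -> R) k i j :
  (forall a b, D a b x = s * (w a * w b - ni * f * H a b)) ->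
  pd k (D i j) x = ds * (w i * w j - ni * f * H i j) +
     s * (dw i * w j + w i * dw j - ni * (df * H i j + f * dh k i j)) ->
  cov2 h D k i j x = ds * (w i * w j - ni * f * H i j) +
     s * ((dw i - \sum_c Y' c * GL c k i) * w j + w i * (dw j - \sum_c Y' c * GL c k j)
          - ni * df * H i j).
Proof.
move=> HD HdD; rewrite /cov2 HdD.
have e1 : \sum_l Gam h l k i x * D l j x =
   s * ((\sum_c Y' c * GL c k i) * w j - ni * f * GL j k i).
  rewrite -GamW -GamL big_distrl /= big_distrr /= -sumrB mulr_sumr.
  by apply: eq_bigr => l _; rewrite HD; ring.
have e2 : \sum_l Gam h l k j x * D i l x =
   s * (w i * (\sum_c Y' c * GL c k j) - ni * f * GL i k j).
  rewrite -GamW -GamL big_distrr /= big_distrr /= -sumrB mulr_sumr.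
  by apply: eq_bigr => l _; rewrite HD (Hsym i l); ring.
rewrite e1 e2 [GL j k i]/GL [GL i k j]/GL (dHsym k j i) (dHsym i j k) (dHsym j k i).
by set nn := n%:R^-1; field.
Qed.

Lemma hdiv_D (D : 'I_n -> 'I_n -> pt -> R) (s f : R) (ds df : 'I_n -> R)
   (Nn : 'I_n -> 'I_n -> R) i :
  (forall k j, cov2 h D k i j x = ds k * (w i * w j - ni * f * H i j) +
     s * (Nn k i * w j + w i * Nn k j - ni * df k * H i j)) ->
  hdiv h D i x = \sum_k ds k * Y' k * w i - ni * f * ds i +
     s * (\sum_k Nn k i * Y' k + w i * \sum_k \sum_j Hi j k * Nn k j - ni * df i).
Proof.
move=> Hc; rewrite /hdiv exchange_big /=.
move: (lowerY h Y i x) Hc => wi Hc.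
have inner : forall k, \sum_j Hi j k * cov2 h D k i j x =
   (ds k * wi) * Y' k - (ni * f * ds k) * (i == k)%:R + (s * Nn k i) * Y' k +
   (s * wi) * \sum_j Hi j k * Nn k j - (s * ni * df k) * (i == k)%:R.
  move=> k; rewrite -[in RHS](Hiw k) -[in RHS](Hh i k).
  rewrite !mulr_sumr; do ! (rewrite -sumrB /= || rewrite -big_split /=).
  by apply: eq_bigr => j _; rewrite Hc; ring.
rewrite (eq_bigr _ (fun k _ => inner k)).
rewrite -[ds i](sum_delta' ds i) -[df i](sum_delta' df i).
transitivity (\sum_k (ds k * Y' k * wi - ni * f * (ds k * (i == k)%:R)
   + s * (Nn k i * Y' k) + s * wi * (\sum_j Hi j k * Nn k j)
   - s * ni * (df k * (i == k)%:R))).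
  by apply: eq_bigr => k _; ring.
rewrite !big_split /= !sumrN -!mulr_sumr; ring.
Qed.


Local Notation Nc a b := (cov1 h (lowerY h Y) a b x).

Lemma symcov_sum i :
  \sum_j Y' j * symcovY_tf h Y i j x =
  2^-1 * (\sum_j Y' j * Nc i j + \sum_j Nc j i * Y' j) -
  ni * (\sum_k \sum_j Hi j k * Nc k j) * w i.
Proof.
have htr : htrace h (fun a b y => 2^-1 * (cov1 h (lowerY h Y) a b y + cov1 h (lowerY h Y) b a y)) x
    = \sum_k \sum_j Hi j k * Nc k j.
  rewrite /htrace.
  transitivity (2^-1 * (\sum_a \sum_b Hi a b * Nc a b + \sum_a \sum_b Hi a b * Nc b a)).
    rewrite -sum2D -sum2Z; apply: eq_bigr => a _; apply: eq_bigr => b _; ring.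
  have e1 : \sum_a \sum_b Hi a b * Nc b a = \sum_a \sum_b Hi a b * Nc a b.
    rewrite sum2_swap; apply: eq_bigr => a _; apply: eq_bigr => b _; by rewrite Hisym.
  have e2 : \sum_k \sum_j Hi j k * Nc k j = \sum_a \sum_b Hi a b * Nc a b.
    apply: eq_bigr => a _; apply: eq_bigr => b _; by rewrite Hisym.
  rewrite e1 e2; by field.
rewrite /symcovY_tf /tf htr -Yh.
set tr := \sum_k \sum_j Hi j k * Nc k j.
transitivity (\sum_j (2^-1 * (Y' j * Nc i j) + 2^-1 * (Nc j i * Y' j) + - ((ni * tr) * (Y' j * H i j)))).
  by apply: eq_bigr => j _; ring.
rewrite !big_split /= sumrN -!mulr_sumr; ring.
Qed.

Lemma sym_D i j : Dtensor h Y i j x = Dtensor h Y j i x.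
Proof. rewrite /Dtensor /tf (Hsym i j); congr (_ * (_ - _)); ring. Qed.

Lemma trace_D : (n%:R != 0 :> R) -> htrace h (Dtensor h Y) x = 0.
Proof.
move=> nz; rewrite {1}/htrace /Dtensor /tf.
set t := htrace h _ x.
set S := (Num.sqrt _ : R) ^- (n + 2).
have ht : t = \sum_i \sum_j Hi i j * (w i * w j) by [].
clearbody t S.
transitivity (S * (\sum_i \sum_j Hi i j * (w i * w j)) - S * ni * t * (\sum_i \sum_j Hi i j * H i j)).
  rewrite -!sum2Z -sum2N -sum2D; apply: eq_bigr => a _; apply: eq_bigr => b _; ring.
rewrite -ht htr_h; by field.
Qed.

End Alg.

Section Final.
Variables (R : realType) (n : nat).
Local Notation ni := (n%:R^-1 : R).

Lemma final_alg (Yv w P Q : 'I_n -> R) (trN M T q : R) :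
  (n%:R != 0 :> R) -> T != 0 -> q != 0 ->
  \sum_i Yv i * w i = q * q -> \sum_i Yv i * P i = M -> \sum_i Yv i * Q i = M ->
  (forall i, \sum_k (- (n.+2)%:R * (T * q)^-1 * ((2 * q)^-1 * (2 * Q k))) * Yv k * w i
     - ni * (q * q) * (- (n.+2)%:R * (T * q)^-1 * ((2 * q)^-1 * (2 * Q i)))
     + T^-1 * (P i + w i * trN - ni * (2 * Q i)) = 0)
  <-> (forall i, 2^-1 * (Q i + P i) - ni * trN * w i = 0).
Proof.
move=> nz Tz qz hw hP hQ.
set c := (n.+2)%:R : R.
have hs : forall i, \sum_k (- c * (T * q)^-1 * ((2 * q)^-1 * (2 * Q k))) * Yv k * w i
   = (- c * (T * q)^-1 * (2 * q)^-1 * 2 * w i) * M.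
  move=> i; rewrite -hQ mulr_sumr; apply: eq_bigr => k _; ring.
have hE : forall i, \sum_k (- c * (T * q)^-1 * ((2 * q)^-1 * (2 * Q k))) * Yv k * w i
     - ni * (q * q) * (- c * (T * q)^-1 * ((2 * q)^-1 * (2 * Q i)))
     + T^-1 * (P i + w i * trN - ni * (2 * Q i))
   = T^-1 * (P i + Q i + w i * trN - c * (q * q)^-1 * w i * M).
  move=> i; rewrite hs /c -addn2 natrD; field.
  by rewrite qz Tz nz.
have hsum : forall a b, \sum_i Yv i * (P i + Q i + w i * a - b * w i * M)
   = M + M + (q * q) * a - b * (q * q) * M.
  move=> a b.
  transitivity (\sum_i (Yv i * P i + Yv i * Q i + a * (Yv i * w i) + - ((b * M) * (Yv i * w i)))).
    by apply: eq_bigr => i _; ring.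
  rewrite !big_split /= sumrN -!mulr_sumr hP hQ hw; ring.
split => H i.
  have H' : forall i, P i + Q i + w i * trN - c * (q * q)^-1 * w i * M = 0.
    move=> j; have := H j; rewrite hE => /eqP; rewrite mulf_eq0 invr_eq0 (negbTE Tz) /=.
    by move/eqP.
  have hM : M + M + (q * q) * trN - c * (q * q)^-1 * (q * q) * M = 0.
    rewrite -hsum big1 // => j _; by rewrite H' mulr0.
  have hM' : M = ni * (q * q) * trN.
    move: hM; rewrite /c -addn2 natrD => hM.
    have e : n%:R * M - q * q * trN =
       - (M + M + q * q * trN - (n%:R + 2%:R) * (q * q)^-1 * (q * q) * M).
      by field; rewrite ?nz ?qz ?Tz.
    move: e; rewrite hM oppr0 => /eqP; rewrite subr_eq0 => /eqP e.
    by rewrite -mulrA -e mulrA mulVf // mul1r.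
  have := H' i; rewrite hM' /c -addn2 natrD => H2.
  have e : 2^-1 * (Q i + P i) - ni * trN * w i =
    2^-1 * (P i + Q i + w i * trN - (n%:R + 2%:R) * (q * q)^-1 * w i * (ni * (q * q) * trN)).
    by field; rewrite ?nz ?qz ?Tz.
  by rewrite e H2 mulr0.
have hM : M + M = 2 * ni * trN * (q * q).
  have e := hsum (- (2 * ni * trN)) 0.
  rewrite big1 in e; last first.
    move=> j _.
    transitivity (Yv j * (2 * (2^-1 * (Q j + P j) - ni * trN * w j))); first by field; rewrite ?nz ?qz ?Tz.
    by rewrite H mulr0 mulr0.
  apply/eqP; rewrite -subr_eq0; apply/eqP.
  transitivity (M + M + q * q * - (2 * ni * trN) - 0 * (q * q) * M); first by ring.
  by rewrite -e.
have hM2 : M = ni * trN * (q * q).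
  transitivity (2^-1 * (M + M)); first by field; rewrite ?nz ?qz ?Tz.
  rewrite hM; by field; rewrite ?nz ?qz ?Tz.
have hPQ : P i + Q i = 2 * ni * trN * w i.
  transitivity (2 * (2^-1 * (Q i + P i) - ni * trN * w i) + 2 * ni * trN * w i); first by field; rewrite ?nz ?qz ?Tz.
  by rewrite H mulr0 add0r.
rewrite hE hPQ hM2 /c -addn2 natrD; field.
by rewrite qz nz.
Qed.


End Final.
Section Main.
Variables (R : realType) (n : nat).
Notation pt := 'rV[R]_n.
Variables (U : set pt) (h : pt -> 'M[R]_n) (Y : pt -> 'rV[R]_n).
Hypothesis oU : open U.
Hypothesis hrm : riemannian_metric U h.
Hypothesis Ysm : forall a, smooth_on U (fun x => Y x 0 a).
Hypothesis hnz : forall x, U x -> normY2 h Y x != 0.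

Lemma Hsym_at y : U y -> forall i j, h y i j = h y j i.
Proof. move=> Uy i j; have [_ [hT _]] := hrm. by rewrite -[in LHS](hT y Uy) mxE. Qed.

Lemma unit_at y : U y -> h y \in unitmx.
Proof.
move=> Uy; have [_ [_ hp]] := hrm.
rewrite unitmxE unitfE; apply/negP => /det0P [v v0 vh].
by have := hp y Uy v v0; rewrite vh mul0mx mxE ltxx.
Qed.

Lemma Hisym_at y : U y -> forall i j, hinv h y i j = hinv h y j i.
Proof.
move=> Uy i j; rewrite /hinv.
have e : (invmx (h y))^T = invmx (h y).
  rewrite trmx_inv; congr invmx; have [_ [hT _]] := hrm; exact: hT.
by rewrite -[in LHS]e mxE.
Qed.

Lemma HHi_at y : U y -> forall i j, \sum_k h y i k * hinv h y k j = (i == j)%:R.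
Proof.
move=> Uy i j; have := congr1 (fun M : 'M[R]_n => M i j) (mulmxV (unit_at Uy)).
by rewrite !mxE.
Qed.

Lemma HiH_at y : U y -> forall i j, \sum_k hinv h y i k * h y k j = (i == j)%:R.
Proof.
move=> Uy i j; have := congr1 (fun M : 'M[R]_n => M i j) (mulVmx (unit_at Uy)).
by rewrite !mxE.
Qed.

Lemma dif_h y a b : U y -> differentiable (fun z => h z a b) y.
Proof. move=> Uy; have [hs _] := hrm; exact: (hs a b [::] y Uy). Qed.

Lemma dif_Y y a : U y -> differentiable (fun z => Y z 0 a) y.
Proof. move=> Uy; exact: (Ysm a [::] Uy). Qed.

Lemma lowerYE a : lowerY h Y a = fun y => \sum_j h y a j * Y y 0 j.
Proof. by []. Qed.

Lemma normY2E : normY2 h Y = fun y => \sum_i Y y 0 i * lowerY h Y i y.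
Proof. by []. Qed.

Lemma dif_w y a : U y -> differentiable (lowerY h Y a) y.
Proof.
move=> Uy; rewrite lowerYE; apply: difsum => j; apply: difM; [exact: dif_h|exact: dif_Y].
Qed.

Lemma dif_f y : U y -> differentiable (normY2 h Y) y.
Proof.
move=> Uy; rewrite normY2E; apply: difsum => i; apply: difM; [exact: dif_Y|exact: dif_w].
Qed.

Lemma f_gt0 y : U y -> 0 < normY2 h Y y.
Proof.
move=> Uy; have [_ [_ hp]] := hrm.
have Y0 : Y y != 0.
  apply: contra (hnz Uy) => /eqP Y0; rewrite /normY2 big1 // => i _.
  by rewrite Y0 mxE mul0r.
have := hp y Uy (Y y) Y0.
suff -> : ((Y y) *m h y *m (Y y)^T) 0 0 = normY2 h Y y by [].
rewrite mxE /normY2 /lowerY.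
transitivity (\sum_j \sum_i Y y 0 i * h y i j * Y y 0 j).
  apply: eq_bigr => j _; rewrite !mxE big_distrl /=.
  by apply: eq_bigr => i _.
rewrite exchange_big /=; apply: eq_bigr => i _; rewrite big_distrr /=.
apply: eq_bigr => j _; ring.
Qed.


Lemma main_pt x : U x ->
  ((forall i j, Dtensor h Y i j x = Dtensor h Y j i x) /\ htrace h (Dtensor h Y) x = 0 /\
    (forall i, hdiv h (Dtensor h Y) i x = 0)) <->
  (forall i, \sum_(j < n) Y x 0 j * symcovY_tf h Y i j x = 0).
Proof.
move=> Ux.
have Hs := Hsym_at Ux. have Hi := Hisym_at Ux. have HHi := HHi_at Ux. have HiH := HiH_at Ux.
have nU : \forall y \near x, U y by apply: open_nbhs_nbhs; split.
have dHs : forall k i j, pd k (fun y => h y i j) x = pd k (fun y => h y j i) x.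
  move=> k i j; apply: pd_near; apply: filterS nU => y Uy; exact: Hsym_at.
have fpos := f_gt0 Ux.
have nz : (n%:R != 0 :> R).
  rewrite pnatr_eq0; apply/negP => /eqP n0.
  move: (hnz Ux); rewrite /normY2 big1 ?eqxx // => i _.
  by have := ltn_ord i; rewrite [in X in (_ < X)%N -> _]n0.
have dfx := dif_f Ux.
set f := normY2 h Y x in fpos *.
set q := Num.sqrt f.
have q0 : q != 0 by rewrite sqrtr_eq0 -ltNge.
have qq : q * q = f by rewrite -expr2 sqr_sqrtr // ltW.
set T := q ^+ n.+2.
have T0 : T != 0 by rewrite expf_neq0.
pose dY k a := pd k (fun y => Y y 0 a) x.
pose dw k a := pd k (lowerY h Y a) x.
pose df k := pd k (normY2 h Y) x.
pose Sf := fun y => (Num.sqrt (normY2 h Y y)) ^- n.+2.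
pose ds k := pd k Sf x.
have Edw : forall k a, dw k a = \sum_b (h x a b * dY k b + Y x 0 b * pd k (fun y => h y a b) x).
  move=> k a; rewrite /dw lowerYE pdsum; last by move=> j; apply: difM; [exact: dif_h|exact: dif_Y].
  by apply: eq_bigr => b _; rewrite pdM //; [exact: dif_h|exact: dif_Y].
have Edf : forall k, df k = \sum_a (Y x 0 a * dw k a + lowerY h Y a x * dY k a).
  move=> k; rewrite /df normY2E pdsum; last by move=> j; apply: difM; [exact: dif_Y|exact: dif_w].
  by apply: eq_bigr => a _; rewrite pdM //; [exact: dif_Y|exact: dif_w].
pose Nc k a := cov1 h (lowerY h Y) k a x.
have ENc : forall k a, Nc k a = dw k a - \sum_c Y x 0 c * GL h x c k a.
  by move=> k a; rewrite /Nc /cov1 GamW.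
pose Q k := \sum_a Y x 0 a * Nc k a.
have EdfQ : forall k, df k = 2 * Q k.
  move=> k; rewrite Edf (df_N Hs dHs (Edw k)); congr (2 * _).
  by apply: eq_bigr => a _; rewrite ENc.
have Eds : forall k, ds k = - (n.+2)%:R * (T * q)^-1 * ((2 * q)^-1 * df k).
  move=> k; rewrite /ds /Sf pd_powN; last 2 first.
  - exact: dif_sqrt.
  - by rewrite -/f -/q.
  rewrite pd_sqrt // -/f -/q /T -exprSr //.
have HD : forall a b, Dtensor h Y a b x =
    T^-1 * (lowerY h Y a x * lowerY h Y b x - n%:R^-1 * f * h x a b).
  by move=> a b; rewrite /Dtensor /tf htr_ww // addn2.
have dSf : differentiable Sf x by apply: dif_powN; [exact: dif_sqrt|by rewrite -/f -/q].
have EdD : forall k i j, pd k (Dtensor h Y i j) x =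
   ds k * (lowerY h Y i x * lowerY h Y j x - n%:R^-1 * f * h x i j) +
   T^-1 * (dw k i * lowerY h Y j x + lowerY h Y i x * dw k j
           - n%:R^-1 * (df k * h x i j + f * pd k (fun y => h y i j) x)).
  move=> k i j.
  rewrite (@pd_near _ _ _ (fun y => Sf y * (lowerY h Y i y * lowerY h Y j y
             - n%:R^-1 * (normY2 h Y y * h y i j)))); last first.
    apply: filterS nU => y Uy; rewrite /Dtensor /tf htr_ww; last 2 first.
    - exact: Hisym_at.
    - exact: HiH_at.
    by rewrite addn2 /Sf mulrA.
  have dT : differentiable (fun y => lowerY h Y i y * lowerY h Y j y
             - n%:R^-1 * (normY2 h Y y * h y i j)) x.
    apply: difB; first by apply: difM; exact: dif_w.
    by apply: difM; [exact: difC|apply: difM; [exact: dfx|exact: dif_h]].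
  rewrite pdM //.
  rewrite pdB; last 2 first.
  - by apply: difM; exact: dif_w.
  - by apply: difM; [exact: difC|apply: difM; [exact: dfx|exact: dif_h]].
  rewrite pdM; [|exact: dif_w|exact: dif_w].
  rewrite pdM; [|exact: difC|apply: difM; [exact: dfx|exact: dif_h]].
  rewrite pdM; [|exact: dfx|exact: dif_h].
  rewrite /pd derive_cst -!/(pd _ _ _) -/(ds k) -/(dw k i) -/(dw k j) -/(df k).
  rewrite /Sf -/f -/q -/T.
  ring.
have Ecov : forall k i j, cov2 h (Dtensor h Y) k i j x =
   ds k * (lowerY h Y i x * lowerY h Y j x - n%:R^-1 * f * h x i j) +
   T^-1 * (Nc k i * lowerY h Y j x + lowerY h Y i x * Nc k j - n%:R^-1 * df k * h x i j).
  by move=> k i j; rewrite (cov2_D Hs Hi HiH dHs HD (EdD k i j)) -!ENc.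
have Ehdiv : forall i, hdiv h (Dtensor h Y) i x =
   \sum_k ds k * Y x 0 k * lowerY h Y i x - n%:R^-1 * f * ds i +
   T^-1 * (\sum_k Nc k i * Y x 0 k + lowerY h Y i x * \sum_k \sum_j hinv h x j k * Nc k j
           - n%:R^-1 * df i).
  by move=> i; apply: hdiv_D => // k j; exact: Ecov.
pose P i := \sum_k Nc k i * Y x 0 k.
pose trN := \sum_k \sum_j hinv h x j k * Nc k j.
pose M := \sum_i Y x 0 i * Q i.
have hw : \sum_i Y x 0 i * lowerY h Y i x = q * q by rewrite qq.
have hP : \sum_i Y x 0 i * P i = M.
  rewrite /M /P /Q.
  transitivity (\sum_i \sum_k Y x 0 i * Y x 0 k * Nc k i).
    by apply: eq_bigr => i _; rewrite big_distrr /=; apply: eq_bigr => k _; ring.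
  rewrite exchange_big /=; apply: eq_bigr => i _; rewrite big_distrr /=.
  by apply: eq_bigr => k _; ring.
have key := final_alg trN nz T0 q0 hw hP (erefl M).
have Ehd2 : forall i, hdiv h (Dtensor h Y) i x =
   \sum_k (- (n.+2)%:R * (T * q)^-1 * ((2 * q)^-1 * (2 * Q k))) * Y x 0 k * lowerY h Y i x
     - n%:R^-1 * (q * q) * (- (n.+2)%:R * (T * q)^-1 * ((2 * q)^-1 * (2 * Q i)))
     + T^-1 * (P i + lowerY h Y i x * trN - n%:R^-1 * (2 * Q i)).
  move=> i; rewrite Ehdiv Eds !EdfQ -qq.
  congr (_ - _ + _).
  by apply: eq_bigr => k _; rewrite Eds EdfQ.
have Esc : forall i, \sum_(j < n) Y x 0 j * symcovY_tf h Y i j x =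
   2^-1 * (Q i + P i) - n%:R^-1 * trN * lowerY h Y i x.
  by move=> i; rewrite (symcov_sum Y Hi).
split.
- move=> [_ [_ Hd]] i; rewrite Esc; apply: (key.1 _ i) => j.
  by rewrite -Ehd2; exact: Hd.
- move=> H; split; first exact: sym_D.
  split; first exact: trace_D.
  move=> i; rewrite Ehd2; apply: (key.2 _ i) => j.
  by rewrite -Esc; exact: H.
Qed.

End Main.

Unset Implicit Arguments. Set Strict Implicit.

Theorem lemma1 (R : realType) (n : nat) (U : set 'rV[R]_n)
  (h : 'rV[R]_n -> 'M[R]_n) (Y : 'rV[R]_n -> 'rV[R]_n) :
  open U ->
  riemannian_metric U h ->
  (forall a, smooth_on U (fun x => Y x 0 a)) ->
  (forall x, U x -> normY2 h Y x != 0) ->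
  TT_on U h (Dtensor h Y) <->
  (forall x, U x -> forall i : 'I_n,
     \sum_(j < n) Y x 0 j * symcovY_tf h Y i j x = 0).
Proof.
move=> oU hrm Ysm hnz; split.
- move=> HT x Ux; exact: ((main_pt oU hrm Ysm hnz Ux).1 (HT x Ux)).
- move=> H x Ux; exact: ((main_pt oU hrm Ysm hnz Ux).2 (H x Ux)).
Qed.
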